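(* Let $p,q>0$ with $p+q=2k\le n$, $\epsilon,\eta\in\{0,1\}$, and let $\tau$ be special with associated integers $u,v$ and $i'_r,j'_s$. Let $x_1>\dots>x_q$ and $y_1>\dots>y_p$ be integers in $[u+v+1,n]$ with $x_i\ne y_j$ for all $i,j$, such that \[ x_i+u+q+1-i\equiv \eta\pmod 2\ (1\le i\le q),\qquad y_{p+1-m}+v+m-1\equiv\epsilon\pmod 2\ (1\le m\le p). \] Then there is exactly one tuple $(w\tau,\sigma,a,b)$ arising from a solution $(w,\sigma,a,b)$ of equation (E) such that the first $q$ coordinates of $\sigma\rho_{\mathfrak g}$ are $x_1,\dots,x_q$ and the last $p$ coordinates are $-y_p,\dots,-y_1$.
   Context: Setting: $n\ge1$, $\mathfrak g=\mathfrak{sp}(2n,\mathbb C)$, $\mathfrak k=\mathfrak{gl}(n,\mathbb C)$, compact Cartan and its dual identified with $\mathbb C^n$; positive compact roots $e_i-e_j$ ($i<j$), positive noncompact roots $e_i+e_j$ ($i<j$), $2e_i$; $\rho_{\mathfrak g}=(n,\dots,1)$, $\rho_{\mathfrak k}=(\frac{n-1}{2},\dots,-\frac{n-1}{2})$; $W$ = all signed permutations of coordinates, $W_{\mathfrak k}=S_n$; $W^1=\{\sigma\in W:\sigma\rho_{\mathfrak g}\text{ satisfies }(\sigma\rho_{\mathfrak g})_1\ge\dots\ge(\sigma\rho_{\mathfrak g})_n\}$. Let $k\ge1$, $\Lambda_k=(n-k,\dots,1,0,-1,\dots,-k+1)$. Special weights: for integers $u,v\ge0$ with $u+v=n-2k$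 and $i_1>\dots>i_u$, $j_1>\dots>j_v$ with $\{i_1,\dots,i_u\}\sqcup\{j_1,\dots,j_v\}=\{k+1,\dots,n-k\}$, put $i'_r=i_r-k$, $j'_s=j_s-k$ and let $\tau=x\Lambda_k-\rho_{\mathfrak k}$ where $x\Lambda_k=(i_1,\dots,i_u,k,k-1,\dots,-k+1,-j_v,\dots,-j_1)$; such $\tau$ are called special, with associated integers $u,v$. Equation (E): for special $\tau$, a solution of (E) is a tuple $(w,\sigma,a,b)$ with $w\in W_{\mathfrak k}$, $\sigma\in W^1$, integers $a_1\ge\dots\ge a_p\ge0$, $b_1\ge\dots\ge b_q\ge0$, such that, with $\alpha_i=\epsilon+2a_i$, $\beta_j=\eta+2b_j$, \[ w\tau+\rho_{\mathfrak k}+(\tfrac{q-p}{2},\dots,\tfrac{q-p}{2})=\sigma\rho_{\mathfrak g}+(-\beta_1,\dots,-\beta_q,0,\dots,0,\alpha_p,\dots,\alpha_1), \] the middle block having $n-p-q$ zeros. *)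

(* Defs.v *)
From HB Require Import structures.
From mathcomp Require Import all_boot all_order all_algebra all_fingroup.
Set Implicit Arguments. Unset Strict Implicit. Unset Printing Implicit Defensive.
Import Order.TTheory GRing.Theory Num.Theory.
Local Open Scope ring_scope.

(* Weights are vectors in Q^n, coordinates indexed 0-based by 'I_n. *)

Definition rho_g (n : nat) : {ffun 'I_n -> rat} := [ffun i : 'I_n => ((n - i)%N)%:R].

Definition rho_k (n : nat) : {ffun 'I_n -> rat} :=
  [ffun i : 'I_n => (n%:R - 1) / 2 - (i : nat)%:R].

(* x Lambda_k = (i_1,...,i_u, k, k-1, ..., -k+1, -j_v, ..., -j_1),
   with I = [:: i_1; ...; i_u] and J = [:: j_1; ...; j_v]. *)
Definition xLam (k : nat) (I J : seq nat) : seq rat :=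
  [seq (i%:R : rat) | i <- I]
  ++ [seq ((k%:R - j%:R) : rat) | j <- iota 0 (2 * k)]
  ++ rev [seq (- (j%:R) : rat) | j <- J].

Definition special (n k u v : nat) (I J : seq nat) : Prop :=
  [/\ size I = u, size J = v, (u + v = n - 2 * k)%N,
      sorted gtn I /\ sorted gtn J
    & perm_eq (I ++ J) (iota k.+1 (n - 2 * k))].

Definition tau (n k : nat) (I J : seq nat) : {ffun 'I_n -> rat} :=
  [ffun i : 'I_n => nth 0 (xLam k I J) i - rho_k n i].

Definition wact (n : nat) (w : {perm 'I_n}) (l : {ffun 'I_n -> rat}) : {ffun 'I_n -> rat} :=
  [ffun i => l (w^-1 i)%g].

(* W = signed permutations: a permutation together with a sign choice per coordinate *)
Definition signed_perm (n : nat) := ({perm 'I_n} * {ffun 'I_n -> bool})%type.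

Definition Wact (n : nat) (sg : signed_perm n) (l : {ffun 'I_n -> rat}) : {ffun 'I_n -> rat} :=
  [ffun i => (-1) ^+ (sg.2 i) * l (sg.1^-1 i)%g].

Definition inW1 (n : nat) (sg : signed_perm n) : Prop :=
  forall i j : 'I_n, (i <= j)%N -> Wact sg (rho_g n) j <= Wact sg (rho_g n) i.

Definition shiftE (n p q eps eta : nat) (a : p.-tuple nat) (b : q.-tuple nat) : seq rat :=
  [seq - (((eta + 2 * x)%N)%:R) | x <- b]
  ++ nseq (n - p - q) 0
  ++ rev [seq (((eps + 2 * x)%N)%:R) | x <- a].

Definition solE (n k p q eps eta : nat) (I J : seq nat) (w : {perm 'I_n})
    (sg : signed_perm n) (a : p.-tuple nat) (b : q.-tuple nat) : Prop :=
  [/\ inW1 sg, sorted geq a, sorted geq b &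
      forall t : 'I_n,
        wact w (tau n k I J) t + rho_k n t + (q%:R - p%:R) / 2
        = Wact sg (rho_g n) t + nth 0 (shiftE n eps eta a b) t].

Definition coordcond (n p q : nat) (X : q.-tuple nat) (Y : p.-tuple nat)
    (sg : signed_perm n) : Prop :=
  forall t : 'I_n,
    ((t < q)%N -> Wact sg (rho_g n) t = (nth 0 X t)%:R) /\
    ((n - p <= t)%N -> Wact sg (rho_g n) t = - (nth 0 Y (n - 1 - t))%:R).
Arguments coordcond : clear implicits.
Arguments solE : clear implicits.
Arguments wact : clear implicits.
Arguments Wact : clear implicits.
Arguments inW1 : clear implicits.

(* Main.v *)
Require Import Defs.
From HB Require Import structures.
From mathcomp Require Import all_boot all_order all_algebra all_fingroup.
From mathcomp Require Import zify ring lra.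
Set Implicit Arguments. Unset Strict Implicit. Unset Printing Implicit Defensive.
Import Order.TTheory GRing.Theory Num.Theory.

Lemma sgtn_nth_le (s : seq nat) (M : nat) : sorted gtn s -> all (fun x => x <= M)%N s ->
  forall r, (r < size s)%N -> (nth 0 s r + r <= M)%N.
Proof.
elim: s M => [|x s IH] M //= Hp /andP[xM Hall] r.
case: r => [|r] /=; first by rewrite addn0.
rewrite ltnS => rs.
have Hmin : all (gtn x) s.
  apply: (order_path_min (leT:=gtn)) Hp; move=> a b c /= h1 h2; lia.
have Hs : sorted gtn s by apply: path_sorted Hp.
have Hall' : all (fun y => y <= M.-1)%N s.
  apply/allP=> y ys; move/allP: Hmin => /(_ y ys) /= hy; move: xM hy; rewrite /gtn /=; lia.
have hx : (nth 0 s r < x)%N by move/allP: Hmin => /(_ _ (mem_nth 0 rs)).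
have := IH M.-1 Hs Hall' r rs; lia.
Qed.

Lemma sgtn_head (s : seq nat) x : sorted gtn s -> x \in s -> (x <= head 0 s)%N.
Proof.
case: s => [|y s] //= Hp; rewrite inE => /orP[/eqP->//|xs].
have Hmin : all (gtn y) s.
  apply: (order_path_min (leT:=gtn)) Hp; move=> a b c /= h1 h2; lia.
move/allP: Hmin => /(_ x xs) /=; lia.
Qed.


Local Open Scope ring_scope.

Definition poolI (I : seq nat) : seq rat := [seq ((nth 0%N I r + r)%N)%:R | r <- iota 0 (size I)].
Definition poolJ (m : nat) (J : seq nat) : seq rat :=
  [seq (m%:R - (s.+1)%:R - (nth 0%N J s)%:R) | s <- iota 0 (size J)].
Definition pool m I J e := poolI I ++ poolJ m J ++ nseq e ((size I)%:R : rat).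
Definition expl m I J (j : nat) : rat :=
  if (j < size I)%N then ((nth 0%N I j + j)%N)%:R else j%:R - (nth 0%N J (m - 1 - j))%:R.

Lemma mem_range (I J : seq nat) m x : perm_eq (I ++ J) (iota 1 m) -> x \in I ++ J -> (1 <= x <= m)%N.
Proof. move=> P; rewrite (perm_mem P) mem_iota; lia. Qed.

Lemma pool_bounds m I J e x : (0 < m)%N -> sorted gtn I -> sorted gtn J -> perm_eq (I ++ J) (iota 1 m) ->
  x \in pool m I J e ->
  [/\ -1 <= x, (m \notin J -> 0 <= x), x <= m%:R & (m \notin I -> x <= m%:R - 1)].
Proof.
move=> m0 sI sJ P.
have rI : forall y, y \in I -> (1 <= y <= m)%N by move=> y yI; apply: (mem_range P); rewrite mem_cat yI.
have rJ : forall y, y \in J -> (1 <= y <= m)%N by move=> y yJ; apply: (mem_range P); rewrite mem_cat yJ orbT.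
have aI : all (fun y => y <= m)%N I by apply/allP=> y /rI; lia.
have aJ : all (fun y => y <= m)%N J by apply/allP=> y /rJ; lia.
have aI' : m \notin I -> all (fun y => y <= m.-1)%N I.
  move=> mI; apply/allP=> y yI; have := rI _ yI; have : y != m by apply: contraNneq mI => <-.
  lia.
have aJ' : m \notin J -> all (fun y => y <= m.-1)%N J.
  move=> mJ; apply/allP=> y yJ; have := rJ _ yJ; have : y != m by apply: contraNneq mJ => <-.
  lia.
have sz : (size I + size J = m)%N by rewrite -size_cat (perm_size P) size_iota.
have mm1 : (m.-1%:R : rat) = m%:R - 1 by rewrite -[in RHS](prednK m0) -natr1 addrK.
rewrite /pool !mem_cat => /or3P[].
- move=> /mapP[r]; rewrite mem_iota add0n => /andP[_ rs] ->.
  have h := sgtn_nth_le sI aI rs.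
  split.
  + have := ler0n rat (nth 0%N I r + r); lra.
  + by [].
  + by rewrite ler_nat.
  + by move=> /aI' /(sgtn_nth_le sI) /(_ r rs); rewrite -mm1 ler_nat.
- move=> /mapP[s]; rewrite mem_iota add0n => /andP[_ ss] ->.
  have h := sgtn_nth_le sJ aJ ss.
  have h1 := rJ _ (mem_nth 0%N ss).
  have hm : (m%:R : rat) >= ((nth 0%N J s + s)%N)%:R by rewrite ler_nat.
  have h1' : (1 : rat) <= (nth 0%N J s)%:R by rewrite (ler_nat _ 1); case/andP: h1.
  rewrite natrD in hm; rewrite -natr1.
  have hs : (0 : rat) <= s%:R by [].
  split.
  + lra.
  + move=> /aJ' /(sgtn_nth_le sJ) /(_ s ss); rewrite -(ler_nat rat) natrD mm1; lra.
  + lra.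
  + move=> _; lra.
- move=> /nseqP[-> _]; split.
  + have := ler0n rat (size I); lra.
  + by [].
  + by rewrite ler_nat; lia.
  + move=> mI.
    have : m \in I ++ J by rewrite (perm_mem P) mem_iota; lia.
    rewrite mem_cat (negbTE mI) /= => mJ.
    have : (0 < size J)%N by case: J mJ {aJ aJ' sJ rJ P sz} => //.
    by rewrite -mm1 ler_nat; lia.
Qed.


Local Open Scope ring_scope.

Lemma pigeon m (A : nat -> nat) : (0 < m)%N ->
  (forall j, (j < m)%N -> (0 < A j <= m)%N) ->
  (forall i j, (i < m)%N -> (j < m)%N -> A i = A j -> i = j) ->
  exists2 j, (j < m)%N & A j = m.
Proof.
move=> m0 hA inj.
case: (boolP (has (fun j => A j == m) (iota 0 m))).
  by move=> /hasP[j]; rewrite mem_iota => /andP[_ jm] /eqP; exists j.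
move=> /hasPn H; exfalso.
have U : uniq (map A (iota 0 m)).
  rewrite map_inj_in_uniq ?iota_uniq // => i j; rewrite !mem_iota !add0n => /andP[_ ?] /andP[_ ?].
  by apply: inj.
have S : {subset map A (iota 0 m) <= iota 1 m.-1}.
  move=> y /mapP[j]; rewrite mem_iota => /andP[_ jm] ->.
  have := H j; rewrite mem_iota add0n jm => /(_ isT) /eqP ne.
  have := hA j jm; rewrite mem_iota; lia.
have := uniq_leq_size U S; rewrite size_map !size_iota; lia.
Qed.

Lemma abs_cases (x : rat) (a : nat) : `|x| = a%:R -> x = a%:R \/ x = - a%:R.
Proof.
have [x0|x0] := lerP 0 x.
  by rewrite ger0_norm // => ->; left.
by rewrite ltr0_norm // => <-; right; rewrite opprK.
Qed.

Lemma iota1S n : iota 1 n = map succn (iota 0 n).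
Proof. by rewrite -(iotaDl 1 0 n). Qed.

Lemma poolI_cons i I : poolI (i :: I) = (i%:R : rat) :: map (fun x => x + 1) (poolI I).
Proof.
rewrite /poolI /= addn0; congr cons.
rewrite iota1S -[RHS]map_comp -map_comp; apply: eq_map => r /=.
by rewrite natr1 addnS.
Qed.

Lemma poolJ_shift m J : poolJ m.+1 J = map (fun x => x + 1) (poolJ m J).
Proof.
rewrite /poolJ -map_comp; apply: eq_map => s /=.
rewrite -natr1; ring.
Qed.

Lemma poolJ_cons m j J : poolJ m.+1 (j :: J) = (m%:R - j%:R) :: poolJ m J.
Proof.
rewrite /poolJ /=; congr cons.
  by rewrite -natr1; ring.
rewrite iota1S -map_comp; apply: eq_map => s /=.
rewrite -!natr1; ring.
Qed.


Local Open Scope ring_scope.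

Lemma iota_rcons m : iota 0 m.+1 = rcons (iota 0 m) m.
Proof. by rewrite -[m.+1]addn1 iotaD -cats1. Qed.

Lemma iota1_rcons m : iota 1 m.+1 = rcons (iota 1 m) m.+1.
Proof. by rewrite -[m.+1]addn1 iotaD -cats1 add1n addn1. Qed.

Lemma peel m : forall (I J : seq nat) (e : nat) (f : nat -> rat) (A : nat -> nat) (rest : seq rat),
  sorted gtn I -> sorted gtn J -> perm_eq (I ++ J) (iota 1 m) ->
  (forall j, (j < m)%N -> `|f j - j%:R| = (A j)%:R /\ (0 < A j <= m)%N) ->
  (forall i j, (i < m)%N -> (j < m)%N -> A i = A j -> i = j) ->
  perm_eq (map f (iota 0 m) ++ rest) (pool m I J e) ->
  (forall j, (j < m)%N -> f j = expl m I J j) /\ perm_eq rest (nseq e (size I)%:R).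
Proof.
elim: m => [|m IH] I J e f A rest sI sJ P hA inj Hp.
  have : size (I ++ J) = 0%N by rewrite (perm_size P).
  rewrite size_cat => /eqP; rewrite addn_eq0 => /andP[/eqP/size0nil eI /eqP/size0nil eJ].
  subst I J; split => //.
have hA' : forall j, (j < m.+1)%N -> (0 < A j <= m.+1)%N by move=> j /hA[].
have [j0 j0m Aj0] := pigeon (ltn0Sn m) hA' inj.
have fmem : forall j, (j < m.+1)%N -> f j \in pool m.+1 I J e.
  move=> j jm; rewrite -(perm_mem Hp) mem_cat; apply/orP; left.
  by apply: map_f; rewrite mem_iota.
have PB := fun j jm => pool_bounds (ltn0Sn m) sI sJ P (fmem j jm).
have U : uniq (I ++ J) by rewrite (perm_uniq P) iota_uniq.
have mIJ : m.+1 \in I ++ J by rewrite (perm_mem P) mem_iota; lia.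
have [absj0 _] := hA j0 j0m; rewrite Aj0 in absj0.
have j0r : (j0%:R : rat) <= m%:R by rewrite ler_nat; lia.
have j0p : (0 : rat) <= j0%:R by [].
move: mIJ; rewrite mem_cat => /orP[mI|mJ].
-
  have mJ : m.+1 \notin J.
    apply/negP=> mJ; move: U; rewrite cat_uniq => /and3P[_ /hasPn /(_ _ mJ) /=]; by rewrite mI.
  case: I sI P Hp mI U PB fmem => [//|i0 I'] sI P Hp mI U PB fmem.
  have i0e : i0 = m.+1.
    have := sgtn_head sI mI; have := mem_range P (mem_head i0 _); simpl; lia.
  subst i0.
  have [fj0lo fj0hi] : 0 <= f j0 /\ f j0 <= m.+1%:R.
    by have [_ h h2 _] := PB j0 j0m; split => //; apply: h.
  have Sm : (m.+1%:R : rat) = m%:R + 1 by rewrite -natr1.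
  have j00 : j0 = 0%N.
    case: (abs_cases absj0) => h.
      have : (j0%:R : rat) <= 0%:R by lra.
      by rewrite ler_nat; lia.
    suff : (1 : rat) <= 0 by []; lra.
  subst j0.
  have f0 : f 0%N = m.+1%:R by case: (abs_cases absj0) => h; lra.
  pose f' := fun j => f j.+1 - 1.
  pose A' := fun j => A j.+1.
  pose rest' := map (fun x => x - 1) rest.
  have sI' : sorted gtn I' by apply: path_sorted sI.
  have P' : perm_eq (I' ++ J) (iota 1 m).
    by move: P; rewrite iota1_rcons perm_sym perm_rcons perm_cons perm_sym.
  have hA2 : forall j, (j < m)%N -> `|f' j - j%:R| = (A' j)%:R /\ (0 < A' j <= m)%N.
    move=> j jm; have [h1 h2] := hA j.+1 jm.
    have ne : A j.+1 != m.+1 by apply/eqP=> h; have := inj j.+1 0%N jm (ltn0Sn m); rewrite Aj0 h => /(_ erefl).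
    split; last by rewrite /A'; clear -h2 ne; lia.
    by rewrite /f' /A' -h1 -natr1; congr (`| _ |); ring.
  have inj2 : forall i j, (i < m)%N -> (j < m)%N -> A' i = A' j -> i = j.
    by move=> i j im jm h; have := inj i.+1 j.+1 im jm h => -[].
  have g_inj : injective (fun x : rat => x + 1) by move=> x y; apply: addIr.
  have Hp2 : perm_eq (map f' (iota 0 m) ++ rest') (pool m I' J e).
    apply: (perm_map_inj g_inj).
    have E1 : map (fun x => x + 1) (map f' (iota 0 m) ++ rest') = map f (iota 1 m) ++ rest.
      rewrite map_cat -!map_comp iota1S -map_comp; congr (_ ++ _).
        by apply: eq_map => j /=; rewrite /f' subrK.
      rewrite -[RHS]map_id; apply: eq_map => x /=; rewrite subrK.
      by [].
    have E2 : map (fun x => x + 1) (pool m I' J e) =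
       map (fun x => x + 1) (poolI I') ++ poolJ m.+1 J ++ nseq e (size (m.+1 :: I'))%:R.
      by rewrite /pool !map_cat poolJ_shift map_nseq /= -natr1.
    rewrite E1 E2 -(perm_cons (m.+1%:R)).
    move: Hp; rewrite /pool poolI_cons.
    have -> : iota 0 m.+1 = 0%N :: iota 1 m by [].
    by rewrite map_cons f0 /=.
  have [H1 H2] := IH I' J e f' A' rest' sI' sJ P' hA2 inj2 Hp2.
  split.
  + case=> [|j] jm; first by rewrite f0 /expl /= addn0.
    have := H1 j jm; rewrite /f' /expl /= ltnS => h.
    have -> : f j.+1 = (f j.+1 - 1) + 1 by ring.
    rewrite h; case: ifP => _.
      by rewrite addnS -natr1.
    have -> : (m.+1 - 1 - j.+1 = m - 1 - j)%N by clear; lia.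
    rewrite -natr1; ring.
  + have -> : rest = map (fun x => x + 1) rest'.
      rewrite /rest' -map_comp -[LHS]map_id; apply: eq_map => x /=; ring.
    by move: (perm_map (fun x => x + 1) H2); rewrite map_nseq /= -natr1.
-
  have mI : m.+1 \notin I.
    apply/negP=> mI; move: U; rewrite cat_uniq => /and3P[_ /hasPn /(_ _ mJ) /=]; by rewrite mI.
  case: J sJ P Hp mJ U PB fmem => [//|j1 J'] sJ P Hp mJ U PB fmem.
  have j1e : j1 = m.+1.
    have := sgtn_head sJ mJ; have := mem_range P (_ : j1 \in I ++ j1 :: J').
    rewrite mem_cat mem_head orbT => /(_ isT); simpl; clear; lia.
  subst j1.
  have [fj0lo fj0hi] : -1 <= f j0 /\ f j0 <= m.+1%:R - 1.
    by have [h _ _ h'] := PB j0 j0m; split => //; apply: h'.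
  have Sm : (m.+1%:R : rat) = m%:R + 1 by rewrite -natr1.
  have j0e : j0 = m.
    case: (abs_cases absj0) => h; first by suff : (1 : rat) <= 0 by []; lra.
    have : (m%:R : rat) <= j0%:R by lra.
    by rewrite ler_nat; clear -j0m; lia.
  subst j0.
  have fm : f m = m%:R - m.+1%:R by case: (abs_cases absj0) => h; lra.
  have sJ' : sorted gtn J' by apply: path_sorted sJ.
  have P' : perm_eq (I ++ J') (iota 1 m).
    move: P; rewrite iota1_rcons perm_sym perm_rcons -cat1s perm_sym.
    by rewrite (perm_catCA I [:: m.+1] J') /= perm_cons.
  have hA2 : forall j, (j < m)%N -> `|f j - j%:R| = (A j)%:R /\ (0 < A j <= m)%N.
    move=> j jm; have [h1 h2] := hA j (ltnW jm).
    have ne : A j != m.+1 by apply/eqP=> h; have := inj j m (ltnW jm) (ltnSn m); rewrite Aj0 h => /(_ erefl); clear -jm; lia.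
    split => //; clear -h2 ne; lia.
  have inj2 : forall i j, (i < m)%N -> (j < m)%N -> A i = A j -> i = j.
    by move=> i j im jm h; apply: inj => //; apply: ltnW.
  have Hp2 : perm_eq (map f (iota 0 m) ++ rest) (pool m I J' e).
    rewrite -(perm_cons (m%:R - m.+1%:R)).
    move: Hp; rewrite /pool poolJ_cons iota_rcons map_rcons fm -cats1 -catA /=.
    rewrite perm_sym (perm_catCA (poolI I) [:: m%:R - m.+1%:R]) /= perm_sym.
    by rewrite (perm_catCA (map f (iota 0 m)) [:: m%:R - m.+1%:R]).
  have [H1 H2] := IH I J' e f A rest sI sJ' P' hA2 inj2 Hp2.
  split => //.
  move=> j; rewrite ltnS leq_eqVlt => /orP[/eqP ->|jm].
    rewrite fm /expl.
    have : (size (I ++ m.+1 :: J') = m.+1)%N by rewrite (perm_size P) size_iota.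
    rewrite size_cat /= => sz.
    have -> : (m < size I)%N = false by clear -sz; lia.
    by have -> : (m.+1 - 1 - m = 0)%N by clear; lia.
  rewrite H1 // /expl; case: ifP => // _.
  by have -> : (m.+1 - 1 - j = (m - 1 - j).+1)%N by clear -jm; lia.
Qed.


Local Open Scope ring_scope.

Lemma gtn_trans : transitive gtn.
Proof. by move=> a b c /= h1 h2; apply: ltn_trans h2 h1. Qed.

Lemma sgtn_lt (s : seq nat) i j : sorted gtn s -> (i < j)%N -> (j < size s)%N ->
  (nth 0%N s j < nth 0%N s i)%N.
Proof.
move=> ss ij js.
have := sorted_ltn_nth gtn_trans 0 ss; move=> /(_ i j); rewrite !inE => h.
by apply: h => //; apply: ltn_trans js.
Qed.

Lemma sgtn_nth_ge (s : seq nat) (L : nat) : sorted gtn s -> all (fun x => L <= x)%N s ->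
  forall r, (r < size s)%N -> (L + (size s - 1 - r) <= nth 0%N s r)%N.
Proof.
move=> ss al r rs.
have hs : ((size s).-1 < size s)%N by move: rs; clear; lia.
have h1 : (L <= nth 0%N s (size s).-1)%N := allP al _ (mem_nth 0%N hs).
have [e|lt] := eqVneq r (size s).-1.
  by rewrite e; move: h1; clear; lia.
have h2 : forall d, (r + d < size s)%N -> (nth 0%N s (r + d) + d <= nth 0%N s r)%N.
  elim=> [|d IH] h; first by rewrite addn0 addn0.
  rewrite addnS in h *.
  have := sgtn_lt ss (ltnSn (r + d)) h.
  have := IH (ltnW h); clear; lia.
have := h2 ((size s).-1 - r)%N; rewrite subnKC; last by move: rs lt; clear; lia.
move=> /(_ (ltac:(move: rs; clear; lia))); move: h1 rs; clear; lia.
Qed.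

Lemma sgtn_uniq (s : seq nat) : sorted gtn s -> uniq s.
Proof. by apply: sorted_uniq; [apply: gtn_trans | move=> x /=; rewrite ltnn]. Qed.

Lemma mono_succ (g : nat -> rat) n : (forall t, (t.+1 < n)%N -> g t.+1 <= g t) ->
  forall i j, (i <= j)%N -> (j < n)%N -> g j <= g i.
Proof.
move=> h i; elim=> [|j IH] ij jn.
  by have -> : i = 0%N by move: ij; clear; lia.
have [e|lt] := eqVneq i j.+1; first by rewrite e.
apply: le_trans (h _ jn) (IH _ _); move: ij lt jn; clear; lia.
Qed.

Lemma sorted_geq_iota (g : nat -> nat) a n :
  (forall i, (a <= i)%N -> (i.+1 < a + n)%N -> (g i.+1 <= g i)%N) ->
  sorted geq (map g (iota a n)).
Proof.
elim: n a => [|n IH] a h //=.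
case: n IH h => [|n] IH h //=.
apply/andP; split.
  by apply: h; move: a; clear; lia.
have := IH a.+1; rewrite /=; apply => i h1 h2; apply: h; move: h1 h2; clear; lia.
Qed.

Lemma perm_map_enum n (w : {perm 'I_n}) : perm_eq (map w (enum 'I_n)) (enum 'I_n).
Proof.
apply: uniq_perm; first by rewrite map_inj_uniq ?enum_uniq //; apply: perm_inj.
  by apply: enum_uniq.
move=> x; rewrite mem_enum; apply/mapP; exists ((w^-1)%g x); first by rewrite mem_enum.
by rewrite permKV.
Qed.

Lemma Wact_rho n (sg : signed_perm n) t :
  Wact n sg (rho_g n) t = (-1) ^+ sg.2 t * ((n - (sg.1^-1)%g t)%N)%:R.
Proof. by rewrite /Wact /rho_g !ffunE. Qed.

Lemma Wact_inj n (sg1 sg2 : signed_perm n) :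
  (forall t, Wact n sg1 (rho_g n) t = Wact n sg2 (rho_g n) t) -> sg1 = sg2.
Proof.
case: sg1 sg2 => [p1 e1] [p2 e2] /= h.
have H : forall t, e1 t = e2 t /\ (p1^-1)%g t = (p2^-1)%g t.
  move=> t; have := h t; rewrite !Wact_rho /=.
  have l1 : (0 < n - (p1^-1)%g t)%N by rewrite subn_gt0.
  have l2 : (0 < n - (p2^-1)%g t)%N by rewrite subn_gt0.
  have r1 : (0 : rat) < ((n - (p1^-1)%g t)%N)%:R by rewrite ltr0n.
  have r2 : (0 : rat) < ((n - (p2^-1)%g t)%N)%:R by rewrite ltr0n.
  case: (e1 t); case: (e2 t); rewrite /= ?expr1 ?expr0 ?mul1r ?mulN1r.
  - move/oppr_inj/eqP; rewrite eqr_nat => /eqP E; split => //; apply: ord_inj.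
    by move: E; have := ltn_ord ((p1^-1)%g t); have := ltn_ord ((p2^-1)%g t); clear; lia.
  - by move=> E; exfalso; move: r1 r2 E; set a := _%:R; set b := _%:R => r1 r2 E;
      have : (0 : rat) < 0 by lra.
  - by move=> E; exfalso; move: r1 r2 E; set a := _%:R; set b := _%:R => r1 r2 E;
      have : (0 : rat) < 0 by lra.
  - move/eqP; rewrite eqr_nat => /eqP E; split => //; apply: ord_inj.
    by move: E; have := ltn_ord ((p1^-1)%g t); have := ltn_ord ((p2^-1)%g t); clear; lia.
have -> : e1 = e2 by apply/ffunP => t; have [] := H t.
have -> : p1 = p2.
  apply: (@invg_inj _ p1 p2); apply/permP => t; by have [] := H t.
by [].
Qed.


Local Open Scope ring_scope.

Definition mu k I J (s : nat) : rat := nth 0 (xLam k I J) s + s%:R.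

Lemma tau_id n k I J (w : {perm 'I_n}) (t : 'I_n) :
  wact n w (tau n k I J) t + rho_k n t = mu k I J ((w^-1)%g t) - (t : nat)%:R.
Proof. rewrite /wact /tau /rho_k /mu !ffunE; ring. Qed.

Lemma xLam_size k I J : size (xLam k I J) = (size I + 2 * k + size J)%N.
Proof. by rewrite /xLam !size_cat size_rev !size_map size_iota addnA. Qed.

Lemma muI k I J s : (s < size I)%N -> mu k I J s = ((nth 0%N I s + s)%N)%:R.
Proof. by move=> h; rewrite /mu /xLam nth_cat size_map h (nth_map 0%N) // natrD. Qed.

Lemma muM k I J s : (size I <= s < size I + 2 * k)%N -> mu k I J s = ((k + size I)%N)%:R.
Proof.
move=> /andP[h1 h2]; rewrite /mu /xLam nth_cat size_map ltnNge h1 /= nth_cat size_map size_iota.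
have -> : (s - size I < 2 * k)%N by move: h1 h2; clear; lia.
rewrite (nth_map 0%N) ?size_iota; last by move: h1 h2; clear; lia.
rewrite nth_iota; last by move: h1 h2; clear; lia.
rewrite add0n natrB // natrD; ring.
Qed.

Lemma muJ k I J s : (size I + 2 * k <= s < size I + 2 * k + size J)%N ->
  mu k I J s = s%:R - (nth 0%N J (size I + 2 * k + size J - 1 - s))%:R.
Proof.
move=> /andP[h1 h2]; rewrite /mu /xLam nth_cat size_map.
have -> : (s < size I)%N = false by move: h1; clear; lia.
rewrite nth_cat size_map size_iota.
have -> : (s - size I < 2 * k)%N = false by move: h1; clear; lia.
rewrite nth_rev size_map; last by move: h1 h2; clear; lia.
rewrite (nth_map 0%N); last by move: h1 h2; clear; lia.
have -> : (size J - (s - size I - 2 * k).+1 = size I + 2 * k + size J - 1 - s)%N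
  by move: h1 h2; clear; lia.
ring.
Qed.

Lemma map_const_nseq (T : Type) (g : nat -> T) c a n :
  (forall i, (a <= i < a + n)%N -> g i = c) -> map g (iota a n) = nseq n c.
Proof.
move=> h; rewrite -(map_nseq n (fun _ => c) 0%N) -[nseq n 0%N]/(nseq n 0%N).
elim: n a h => [|n IH] a h //=.
rewrite h; last by clear; lia.
congr cons; apply: IH => i hi; apply: h; move: hi; clear; lia.
Qed.

Lemma pool_mu k I J :
  all (fun x => k < x)%N (I ++ J) ->
  perm_eq (map (fun s => mu k I J s - k%:R) (iota 0 (size I + 2 * k + size J)))
          (pool (size I + size J) (map (subn^~ k) I) (map (subn^~ k) J) (2 * k)).
Proof.
move=> al; set I' := map (subn^~ k) I; set J' := map (subn^~ k) J.
have alI : forall i, (i < size I)%N -> (k < nth 0%N I i)%N.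
  by move=> i hi; move/allP: al; apply; rewrite mem_cat mem_nth.
have alJ : forall i, (i < size J)%N -> (k < nth 0%N J i)%N.
  by move=> i hi; move/allP: al; apply; rewrite mem_cat mem_nth ?orbT.
rewrite iotaD iotaD !map_cat /pool.
have sI' : size I' = size I by rewrite size_map.
have sJ' : size J' = size J by rewrite size_map.
have E1 : map (fun s => mu k I J s - k%:R) (iota 0 (size I)) = poolI I'.
  rewrite /poolI sI'; apply/eq_in_map => s; rewrite mem_iota add0n => /andP[_ hs].
  rewrite muI // /I' (nth_map 0%N) // !natrD natrB; last by apply: ltnW; apply: alI.
  ring.
have E2 : map (fun s => mu k I J s - k%:R) (iota (0 + size I) (2 * k)) = nseq (2 * k) (size I')%:R.
  apply: map_const_nseq => i hi; rewrite muM; last by move: hi; clear; lia.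
  by rewrite sI' natrD; ring.
have E3 : map (fun s => mu k I J s - k%:R) (iota (0 + (size I + 2 * k)) (size J)) =
          rev (poolJ (size I + size J) J').
  apply: (@eq_from_nth _ 0).
    by rewrite size_rev !size_map !size_iota.
  move=> i; rewrite size_map size_iota => hi.
  rewrite nth_rev; last by rewrite size_map size_iota sJ'.
  rewrite (nth_map 0%N) ?size_iota // nth_iota // muJ; last by move: hi; clear; lia.
  rewrite /poolJ sJ' size_map size_iota (nth_map 0%N); last by rewrite size_iota; move: hi; clear; lia.
  rewrite nth_iota; last by move: hi; clear; lia.
  rewrite add0n /J' (nth_map 0%N); last by move: hi; clear; lia.
  have -> : (size I + 2 * k + size J - 1 - (0 + (size I + 2 * k) + i) = size J - i.+1)%N
    by move: hi; clear; lia.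
  rewrite natrB; last by apply: ltnW; apply: alJ; move: hi; clear; lia.
  have -> : (size J - i.+1).+1 = (size J - i)%N by move: hi; clear; lia.
  rewrite !natrD natrB; last by move: hi; clear; lia.
  ring.
rewrite E1 E2 E3 -catA perm_cat2l perm_catC perm_cat2r.
by rewrite perm_rev.
Qed.


Local Open Scope ring_scope.

Lemma shiftE_nth n p q eps eta (a : p.-tuple nat) (b : q.-tuple nat) t :
  (p + q <= n)%N -> (t < n)%N ->
  nth 0 (@shiftE n p q eps eta a b) t =
   if (t < q)%N then - ((eta + 2 * nth 0%N b t)%N)%:R
   else if (t < n - p)%N then 0 else ((eps + 2 * nth 0%N a (n - 1 - t))%N)%:R.
Proof.
move=> pqn tn; rewrite /shiftE nth_cat size_map size_tuple.
case: ifP => tq.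
  by rewrite (nth_map 0%N) ?size_tuple.
rewrite nth_cat size_nseq.
case: ifP => h1.
  have -> : (t < n - p)%N by move: h1 tq pqn; clear; lia.
  by rewrite nth_nseq h1.
have -> : (t < n - p)%N = false by move: h1 tq pqn; clear; lia.
rewrite nth_rev size_map size_tuple; last by move: h1 tq pqn tn; clear; lia.
rewrite (nth_map 0%N) ?size_tuple; last by move: h1 tq pqn tn; clear; lia.
by have -> : (p - (t - q - (n - p - q)).+1 = n - 1 - t)%N by move: h1 tq pqn tn; clear; lia.
Qed.

Lemma expl_lo m I J j : (j < size I)%N -> expl m I J j - j%:R = (nth 0%N I j)%:R.
Proof. by move=> h; rewrite /expl h natrD; ring. Qed.

Lemma expl_hi m I J j : (size I <= j)%N -> expl m I J j - j%:R = - (nth 0%N J (m - 1 - j))%:R.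
Proof. by move=> h; rewrite /expl ltnNge h /=; ring. Qed.

Lemma sorted_sub k (s : seq nat) : all (fun x => k < x)%N s -> sorted gtn s -> sorted gtn (map (subn^~ k) s).
Proof.
move=> al ss; rewrite sorted_map; apply: (sub_in_sorted _ al ss).
move=> x y /= hx hy /= h; move: hx hy h; clear; lia.
Qed.

Lemma iota_sub k m : map (subn^~ k) (iota k.+1 m) = iota 1 m.
Proof.
have -> : k.+1 = (k + 1)%N by rewrite addn1.
rewrite iotaDl -map_comp -[RHS]map_id; apply: eq_map => x /=.
by rewrite addKn.
Qed.

Lemma natr_eq (a b : nat) : a = b -> (a%:R : rat) = b%:R.
Proof. by move=> ->. Qed.


Local Close Scope ring_scope.
Unset Implicit Arguments.

Theorem mainTheorem5 (n k p q u v eps eta : nat) (I J : seq nat)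
    (X : q.-tuple nat) (Y : p.-tuple nat) :
  (1 <= n)%N -> (0 < p)%N -> (0 < q)%N -> (p + q = 2 * k)%N -> (2 * k <= n)%N ->
  (eps <= 1)%N -> (eta <= 1)%N ->
  special n k u v I J ->
  sorted gtn X -> sorted gtn Y ->
  (forall i, (i < q)%N -> (u + v + 1 <= nth 0 X i <= n)%N) ->
  (forall j, (j < p)%N -> (u + v + 1 <= nth 0 Y j <= n)%N) ->
  (forall i j, (i < q)%N -> (j < p)%N -> nth 0 X i <> nth 0 Y j) ->
  (forall i, (1 <= i <= q)%N -> (nth 0 X (i - 1) + u + q + 1 - i) %% 2 = eta) ->
  (forall m, (1 <= m <= p)%N -> (nth 0 Y (p - m) + v + m - 1) %% 2 = eps) ->
  exists (lam : {ffun 'I_n -> rat}) (sg : signed_perm n) (a : p.-tuple nat) (b : q.-tuple nat),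
    (exists w : {perm 'I_n},
        lam = wact n w (tau n k I J) /\ solE n k p q eps eta I J w sg a b /\ coordcond n p q X Y sg) /\
    (forall (w' : {perm 'I_n}) (sg' : signed_perm n) (a' : p.-tuple nat) (b' : q.-tuple nat),
        solE n k p q eps eta I J w' sg' a' b' -> coordcond n p q X Y sg' ->
        [/\ wact n w' (tau n k I J) = lam, sg' = sg, a' = a & b' = b]).
Proof.
Local Open Scope ring_scope.
move=> n1 p0 q0 pqk kn eps1 eta1 [sI sJ um [sIs sJs] PIJ] sX sY Xr Yr XY parX parY.
have nE : n = (q + (u + v) + p)%N by move: um pqk kn; clear; lia.
have allIJ : all (fun x => k < x)%N (I ++ J).
  by apply/allP => x; rewrite (perm_mem PIJ) mem_iota; clear; lia.
have allI : all (fun x => k < x)%N I by move: allIJ; rewrite all_cat => /andP[].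
have allJ : all (fun x => k < x)%N J by move: allIJ; rewrite all_cat => /andP[].
pose I' := map (subn^~ k) I. pose J' := map (subn^~ k) J.
have sI' : sorted gtn I' := sorted_sub allI sIs.
have sJ' : sorted gtn J' := sorted_sub allJ sJs.
have PIJ' : perm_eq (I' ++ J') (iota 1 (u + v)).
  by rewrite -map_cat -(iota_sub k) um; apply: perm_map.
have szI' : size I' = u by rewrite size_map.
have szJ' : size J' = v by rewrite size_map.
have rI' : forall i, (i < u)%N -> (1 <= nth 0%N I' i <= u + v)%N.
  by move=> i hi; apply: (mem_range PIJ'); rewrite mem_cat mem_nth ?szI'.
have rJ' : forall i, (i < v)%N -> (1 <= nth 0%N J' i <= u + v)%N.
  by move=> i hi; apply: (mem_range PIJ'); rewrite mem_cat mem_nth ?szJ' ?orbT.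
have nI' : forall i, (i < u)%N -> (nth 0%N I' i)%:R = (nth 0%N I i)%:R - k%:R :> rat.
  move=> i hi; rewrite (nth_map 0%N) /=; last by rewrite sI.
  have kI : (k <= nth 0%N I i)%N by apply: ltnW; move/allP: allI; apply; rewrite mem_nth ?sI.
  by have := natrB rat kI; move=> ->.
have nJ' : forall i, (i < v)%N -> (nth 0%N J' i)%:R = (nth 0%N J i)%:R - k%:R :> rat.
  move=> i hi; rewrite (nth_map 0%N) /=; last by rewrite sJ.
  have kI : (k <= nth 0%N J i)%N by apply: ltnW; move/allP: allJ; apply; rewrite mem_nth ?sJ.
  by have := natrB rat kI; move=> ->.
have pqR : (p%:R : rat) + q%:R = 2 * k%:R by rewrite -natrD pqk natrM.
pose c : rat := (q%:R - p%:R) / 2.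
have cE : c = q%:R - k%:R by rewrite /c; lra.
(* the sequence of absolute values of sigma rho *)
pose S := (X : seq nat) ++ I' ++ rev J' ++ rev (Y : seq nat).
have szS : size S = n.
  by rewrite /S !size_cat !size_rev size_tuple szI' szJ' size_tuple nE; clear; lia.
have Sa : forall t, (t < q)%N -> nth 0%N S t = nth 0%N X t.
  by move=> t ht; rewrite /S nth_cat size_tuple ht.
have Sb : forall t, (q <= t < q + u)%N -> nth 0%N S t = nth 0%N I' (t - q).
  move=> t ht; rewrite /S nth_cat size_tuple.
  have -> : (t < q)%N = false by move: ht; clear; lia.
  by rewrite nth_cat szI'; have -> : (t - q < u)%N by move: ht; clear; lia.
have Sc : forall t, (q + u <= t < q + (u + v))%N -> nth 0%N S t = nth 0%N J' (u + v - 1 - (t - q)).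
  move=> t ht; rewrite /S nth_cat size_tuple.
  have -> : (t < q)%N = false by move: ht; clear; lia.
  rewrite nth_cat szI'; have -> : (t - q < u)%N = false by move: ht; clear; lia.
  rewrite nth_cat size_rev szJ'; have -> : (t - q - u < v)%N by move: ht; clear; lia.
  rewrite nth_rev szJ'; last by move: ht; clear; lia.
  by congr nth; move: ht; clear; lia.
have Sd : forall t, (q + (u + v) <= t < n)%N -> nth 0%N S t = nth 0%N Y (n - 1 - t).
  move=> t ht; rewrite /S nth_cat size_tuple.
  have -> : (t < q)%N = false by move: ht; clear; lia.
  rewrite nth_cat szI'; have -> : (t - q < u)%N = false by move: ht; clear; lia.
  rewrite nth_cat size_rev szJ'; have -> : (t - q - u < v)%N = false by move: ht; clear; lia.
  rewrite nth_rev size_tuple; last by move: ht nE; clear; lia.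
  by congr nth; move: ht nE; clear; lia.
have PS : perm_eq S ((X ++ Y) ++ (I' ++ J')).
  apply/seq.permP => P0; rewrite /S !count_cat !count_rev; clear; lia.
have memXY : forall x, x \in (X : seq nat) ++ Y -> (u + v + 1 <= x <= n)%N.
  move=> x; rewrite mem_cat => /orP[] /(nthP 0)[i]; rewrite size_tuple => hi <-.
    exact: Xr.
  exact: Yr.
have uXY : uniq ((X : seq nat) ++ Y).
  rewrite cat_uniq (sgtn_uniq sX) (sgtn_uniq sY) /= andbT.
  apply/hasPn => y /(nthP 0)[j]; rewrite size_tuple => hj <-.
  apply/negP => /(nthP 0)[i]; rewrite size_tuple => hi E.
  exact: (XY i j hi hj E).
have uS : uniq S.
  rewrite (perm_uniq PS) cat_uniq uXY (perm_uniq PIJ') iota_uniq /= andbT.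
  apply/hasPn => x /(mem_range PIJ') h1; apply/negP => /memXY; move: h1; clear; lia.
have rS : forall t, (t < n)%N -> (1 <= nth 0%N S t <= n)%N.
  move=> t ht; have : nth 0%N S t \in S by rewrite mem_nth ?szS.
  rewrite (perm_mem PS) mem_cat => /orP[/memXY|/(mem_range PIJ')]; move: nE; clear; lia.
pose sstar (t : nat) : rat := if (q + u <= t)%N then - (nth 0%N S t)%:R else (nth 0%N S t)%:R.
pose Lstar (t : nat) : rat := if (q <= t < q + (u + v))%N then sstar t else u%:R + q%:R - t%:R.
pose h (t : 'I_n) : 'I_n := insubd t (n - nth 0%N S t)%N.
have hval : forall t : 'I_n, val (h t) = (n - nth 0%N S t)%N.
  move=> t; rewrite /h val_insubd; have := rS t (ltn_ord t); case: ifP => //.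
  have := ltn_ord t; clear; lia.
have hinj : injective h.
  move=> t1 t2 /(congr1 val); rewrite !hval => E.
  apply: ord_inj; apply/eqP; rewrite -(nth_uniq 0%N _ _ uS) ?szS //; apply/eqP.
  suff : nth 0%N S t1 = nth 0%N S t2 :> nat by [].
  have := rS t1 (ltn_ord t1); have := rS t2 (ltn_ord t2); move: E; clear; lia.
pose sgs : signed_perm n := (((perm hinj)^-1)%g, [ffun t : 'I_n => (q + u <= t)%N]).
have Wsg : forall t : 'I_n, Wact n sgs (rho_g n) t = sstar t.
  move=> t; rewrite Wact_rho /sgs /= invgK permE ffunE hval.
  have ht := rS t (ltn_ord t).
  rewrite subKn; last by move: ht; clear; lia.
  by rewrite /sstar; case: ifP => _ /=; rewrite ?expr1 ?expr0; ring.
pose pf (t : nat) : nat := if (t < q)%N then (u + t)%N else if (t < q + u)%N then (t - q)%N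
   else if (t < q + (u + v))%N then (t - q + 2 * k)%N else (t - (q + (u + v)) + u + q)%N.
have pfn : forall t, (t < n)%N -> (pf t < n)%N.
  move=> t ht; rewrite /pf; do !case: ifP => [/idP|/negbT]; move: ht nE pqk; clear; lia.
have pfinj : forall t1 t2, (t1 < n)%N -> (t2 < n)%N -> pf t1 = pf t2 -> t1 = t2.
  move=> t1 t2 h1 h2; rewrite /pf; do !case: ifP => [/idP|/negbT]; move: h1 h2 nE pqk; clear; lia.
pose po (t : 'I_n) : 'I_n := insubd t (pf t).
have poval : forall t : 'I_n, val (po t) = pf t.
  by move=> t; rewrite /po val_insubd pfn.
have poinj : injective po.
  move=> t1 t2 /(congr1 val); rewrite !poval => E; apply: ord_inj.
  exact: (pfinj _ _ (ltn_ord t1) (ltn_ord t2) E).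
pose ws : {perm 'I_n} := ((perm poinj)^-1)%g.
pose lams : {ffun 'I_n -> rat} := [ffun t : 'I_n => Lstar t - rho_k n t - c].
have allX : all (fun x => u + v + 1 <= x)%N X.
  apply/allP => x /(nthP 0%N)[i]; rewrite size_tuple => hi <-; by case/andP: (Xr i hi).
have allY : all (fun x => u + v + 1 <= x)%N Y.
  apply/allP => x /(nthP 0%N)[i]; rewrite size_tuple => hi <-; by case/andP: (Yr i hi).
have Xlo : forall t, (t < q)%N -> (u + v + 1 + (q - 1 - t) <= nth 0%N X t)%N.
  by move=> t ht; have := sgtn_nth_ge sX allX; rewrite size_tuple => /(_ t ht).
have Ylo : forall t, (t < p)%N -> (u + v + 1 + (p - 1 - t) <= nth 0%N Y t)%N.
  by move=> t ht; have := sgtn_nth_ge sY allY; rewrite size_tuple => /(_ t ht).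
pose bn (t : nat) : nat := ((nth 0%N X t + t - u - q - eta) %/ 2)%N.
have bnE : forall t, (t < q)%N -> (eta + 2 * bn t = nth 0%N X t + t - u - q)%N.
  move=> t ht; have px := parX t.+1 (ltac:(move: ht; clear; lia)).
  rewrite subSS subn0 in px.
  have := Xlo t ht; rewrite /bn; move: px ht eta1; clear; lia.
pose an (i : nat) : nat := ((nth 0%N Y i + i + 1 - v - p - eps) %/ 2)%N.
have anE : forall i, (i < p)%N -> (eps + 2 * an i = nth 0%N Y i + i + 1 - v - p)%N.
  move=> i hi; have py := parY (p - i)%N (ltac:(move: hi; clear; lia)).
  rewrite subKn in py; last by move: hi; clear; lia.
  have := Ylo i hi; rewrite /an; move: py hi eps1; clear; lia.
have bnR : forall t, (t < q)%N ->
    ((eta + 2 * bn t)%N)%:R = (nth 0%N X t)%:R + t%:R - u%:R - q%:R :> rat.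
  move=> t ht; rewrite bnE // -subnDA.
  have hh : (u + q <= nth 0%N X t + t)%N by have := Xlo t ht; move: ht; clear; lia.
  by have := natrB rat hh; move=> ->; rewrite !natrD; ring.
have anR : forall i, (i < p)%N ->
    ((eps + 2 * an i)%N)%:R = (nth 0%N Y i)%:R + i%:R + 1 - v%:R - p%:R :> rat.
  move=> i hi; rewrite anE // -subnDA.
  have hh : (v + p <= nth 0%N Y i + i + 1)%N by have := Ylo i hi; move: hi; clear; lia.
  by have := natrB rat hh; move=> ->; rewrite !natrD; ring.
have szb : size (map bn (iota 0 q)) == q by rewrite size_map size_iota.
pose bs : q.-tuple nat := Tuple szb.
have sza : size (map an (iota 0 p)) == p by rewrite size_map size_iota.
pose as_ : p.-tuple nat := Tuple sza.
have nthbs : forall t, (t < q)%N -> nth 0%N bs t = bn t.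
  by move=> t ht; rewrite /= (nth_map 0%N) ?size_iota // nth_iota.
have nthas : forall t, (t < p)%N -> nth 0%N as_ t = an t.
  by move=> t ht; rewrite /= (nth_map 0%N) ?size_iota // nth_iota.
have sB : forall t, (t < q)%N -> sstar t = (nth 0%N X t)%:R.
  move=> t ht; rewrite /sstar Sa //.
  by have -> : (q + u <= t)%N = false by move: ht; clear; lia.
have sI2 : forall t, (q <= t < q + u)%N -> sstar t = (nth 0%N I' (t - q))%:R.
  move=> t ht; rewrite /sstar Sb //.
  by have -> : (q + u <= t)%N = false by move: ht; clear; lia.
have sJ2 : forall t, (q + u <= t < q + (u + v))%N -> sstar t = - (nth 0%N J' (u + v - 1 - (t - q)))%:R.
  move=> t ht; rewrite /sstar Sc //.
  by have -> : (q + u <= t)%N by move: ht; clear; lia.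
have sA : forall t, (q + (u + v) <= t < n)%N -> sstar t = - (nth 0%N Y (n - 1 - t))%:R.
  move=> t ht; rewrite /sstar Sd //.
  by have -> : (q + u <= t)%N by move: ht; clear; lia.
have muP : forall t, (t < n)%N -> mu k I J (pf t) - t%:R = Lstar t - c.
  move=> t ht; rewrite cE.
  case: (ltnP t q) => h1.
    rewrite /Lstar /pf h1.
    have -> : (q <= t < q + (u + v))%N = false by move: h1; clear; lia.
    rewrite muM; last by rewrite sI; move: h1 pqk; clear; lia.
    rewrite sI !natrD; ring.
  case: (ltnP t (q + u)) => h2.
    rewrite /Lstar /pf h2.
    have -> : (t < q)%N = false by move: h1; clear; lia.
    have -> : (q <= t < q + (u + v))%N by move: h1 h2; clear; lia.
    rewrite sI2; last by move: h1 h2; clear; lia.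
    rewrite muI; last by rewrite sI; move: h1 h2; clear; lia.
    rewrite nI'; last by move: h1 h2; clear; lia.
    have tq := natrB rat h1.
    rewrite natrD tq; ring.
  case: (ltnP t (q + (u + v))) => h3.
    rewrite /Lstar /pf h3.
    have -> : (t < q)%N = false by move: h1; clear; lia.
    have -> : (t < q + u)%N = false by move: h2; clear; lia.
    rewrite h1 /=.
    rewrite sJ2; last by move: h2 h3; clear; lia.
    rewrite muJ; last by rewrite sI sJ; move: h2 h3 h1; clear; lia.
    rewrite sI sJ.
    have -> : (u + 2 * k + v - 1 - (t - q + 2 * k) = u + v - 1 - (t - q))%N
      by move: h1 h2 h3; clear; lia.
    rewrite nJ'; last by move: h1 h2 h3; clear; lia.
    have tq := natrB rat h1.
    rewrite natrD tq natrM; ring.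
  rewrite /Lstar /pf.
  have -> : (t < q)%N = false by move: h1; clear; lia.
  have -> : (t < q + u)%N = false by move: h2; clear; lia.
  have -> : (t < q + (u + v))%N = false by move: h3; clear; lia.
  rewrite andbF.
  rewrite muM; last by rewrite sI; move: h3 ht nE pqk; clear; lia.
  rewrite sI !natrD; ring.
have Lw : forall t : 'I_n, wact n ws (tau n k I J) t + rho_k n t + c = Lstar t.
  move=> t; rewrite tau_id /ws invgK permE poval.
  have := muP t (ltn_ord t); lra.
have lamsE : lams = wact n ws (tau n k I J).
  by apply/ffunP => t; rewrite ffunE; have := Lw t; lra.
have nR : (n%:R : rat) = q%:R + u%:R + v%:R + p%:R by have := natr_eq nE; rewrite !natrD; lra.
have sXX : forall i j, (i < j)%N -> (j < q)%N -> (nth 0%N X j < nth 0%N X i)%N.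
  by move=> i j ij jq; apply: sgtn_lt => //; rewrite size_tuple.
have sYY : forall i j, (i < j)%N -> (j < p)%N -> (nth 0%N Y j < nth 0%N Y i)%N.
  by move=> i j ij jq; apply: sgtn_lt => //; rewrite size_tuple.
have sII : forall i j, (i < j)%N -> (j < u)%N -> (nth 0%N I' j < nth 0%N I' i)%N.
  by move=> i j ij jq; apply: sgtn_lt => //; rewrite szI'.
have sJJ : forall i j, (i < j)%N -> (j < v)%N -> (nth 0%N J' j < nth 0%N J' i)%N.
  by move=> i j ij jq; apply: sgtn_lt => //; rewrite szJ'.
have castle : forall a b : nat, (a <= b)%N -> (a%:R : rat) <= b%:R by move=> a b; rewrite ler_nat.
have lo1 : forall t, (t < q)%N -> u%:R + v%:R + 1 <= sstar t.
  move=> t ht; rewrite sB //; have := castle _ _ (Xlo t ht); rewrite !natrD.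
  have := ler0n rat (q - 1 - t); lra.
have lo2 : forall t, (q <= t < q + u)%N -> 1 <= sstar t.
  move=> t ht; rewrite sI2 //; have := rI' (t - q)%N (ltac:(move: ht; clear; lia)).
  by case/andP => hh _; apply: (castle 1%N).
have up1 : forall t, (q <= t < n)%N -> sstar t <= u%:R + v%:R.
  move=> t ht; case: (ltnP t (q + u)) => h2.
    rewrite sI2; last by move: ht h2; clear; lia.
    have := rI' (t - q)%N (ltac:(move: ht h2; clear; lia)) => /andP[_ hh].
    by have := castle _ _ hh; rewrite natrD.
  case: (ltnP t (q + (u + v))) => h3.
    rewrite sJ2; last by move: h2 h3; clear; lia.
    have := ler0n rat (nth 0%N J' (u + v - 1 - (t - q))); have := ler0n rat u; have := ler0n rat v; lra.
  rewrite sA; last by move: ht h3; clear; lia.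
  have := ler0n rat (nth 0%N Y (n - 1 - t)); have := ler0n rat u; have := ler0n rat v; lra.
have up2 : forall t, (q + u <= t < n)%N -> sstar t <= -1.
  move=> t ht; case: (ltnP t (q + (u + v))) => h3.
    rewrite sJ2; last by move: ht h3; clear; lia.
    have := rJ' (u + v - 1 - (t - q))%N (ltac:(move: ht h3; clear; lia)) => /andP[hh _].
    have := castle 1%N _ hh; lra.
  rewrite sA; last by move: ht h3; clear; lia.
  have := Ylo (n - 1 - t)%N (ltac:(move: ht h3 nE; clear; lia)) => hh.
  have := castle 1%N (nth 0%N Y (n - 1 - t)) (ltac:(move: hh; clear; lia)); lra.
have lo3 : forall t, (q + u <= t < q + (u + v))%N -> - (u%:R + v%:R) <= sstar t.
  move=> t ht; rewrite sJ2 //.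
  have := rJ' (u + v - 1 - (t - q))%N (ltac:(move: ht; clear; lia)) => /andP[_ hh].
  have := castle _ _ hh; rewrite natrD; lra.
have up4 : forall t, (q + (u + v) <= t < n)%N -> sstar t <= - (u%:R + v%:R + 1).
  move=> t ht; rewrite sA //.
  have := Ylo (n - 1 - t)%N (ltac:(move: ht nE; clear; lia)) => hh.
  have := castle (u + v + 1)%N (nth 0%N Y (n - 1 - t)) (ltac:(move: hh; clear; lia)); rewrite !natrD; lra.
have smono : forall t, (t.+1 < n)%N -> sstar t.+1 <= sstar t.
  move=> t ht.
  case: (ltnP t.+1 q) => a1.
    rewrite !sB //; last by apply: ltnW.
    by apply: castle; apply: ltnW; apply: sXX.
  case: (ltnP t q) => a2.
    have := lo1 t a2; have := up1 t.+1 (ltac:(move: a1 ht; clear; lia)); lra.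
  case: (ltnP t.+1 (q + u)) => a3.
    rewrite !sI2; try (move: a1 a2 a3; clear; lia).
    apply: castle; apply: ltnW; apply: sII; move: a2 a3; clear; lia.
  case: (ltnP t (q + u)) => a4.
    have := lo2 t (ltac:(move: a2 a4; clear; lia)); have := up2 t.+1 (ltac:(move: a3 ht; clear; lia)); lra.
  case: (ltnP t.+1 (q + (u + v))) => a5.
    rewrite !sJ2; try (move: a4 a5; clear; lia).
    rewrite lerN2; apply: castle; apply: ltnW; apply: sJJ; move: a4 a5; clear; lia.
  case: (ltnP t (q + (u + v))) => a6.
    have := lo3 t (ltac:(move: a4 a6; clear; lia)); have := up4 t.+1 (ltac:(move: a5 ht; clear; lia)); lra.
  rewrite !sA; try (move: a6 ht; clear; lia).
  rewrite lerN2; apply: castle; apply: ltnW; apply: sYY; move: a6 ht nE; clear; lia.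
have pqn : (p + q <= n)%N by move: nE; clear; lia.
have eqs : forall t : 'I_n, Lstar t = sstar t + nth 0 (@shiftE n p q eps eta as_ bs) t.
  move=> t; rewrite shiftE_nth //.
  case: (ltnP t q) => h1.
    rewrite nthbs // bnR // sB // /Lstar.
    have -> : (q <= t < q + (u + v))%N = false by move: h1; clear; lia.
    lra.
  case: (ltnP t (n - p)) => h2.
    rewrite addr0 /Lstar.
    by have -> : (q <= t < q + (u + v))%N by move: h1 h2 nE; clear; lia.
  have ht := ltn_ord t.
  rewrite nthas; last by move: h2 ht p0; clear; lia.
  rewrite anR; last by move: h2 ht p0; clear; lia.
  rewrite sA; last by move: h2 ht nE; clear; lia.
  rewrite /Lstar.
  have -> : (q <= t < q + (u + v))%N = false by move: h2 nE; clear; lia.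
  have e : ((n - 1 - t) + t + 1)%N = n by move: ht; clear; lia.
  have := natr_eq e; rewrite !natrD; lra.
exists lams, sgs, as_, bs; split.
  exists ws; split; first exact: lamsE.
  split.
    split.
    - move=> i j ij; rewrite !Wsg.
      exact: (mono_succ smono ij (ltn_ord j)).
    - rewrite /=; apply: sorted_geq_iota => i _ hi; rewrite /an.
      have := sYY i i.+1 (ltnSn i) (ltac:(move: hi; clear; lia)); clear; lia.
    - rewrite /=; apply: sorted_geq_iota => i _ hi; rewrite /bn.
      have := sXX i i.+1 (ltnSn i) (ltac:(move: hi; clear; lia)); clear; lia.
    - by move=> t; rewrite Lw Wsg eqs.
  move=> t; split => ht; rewrite Wsg.
    by rewrite sB.
  by rewrite sA //; move: ht (ltn_ord t) nE; clear; lia.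
move=> w' sg' a' b' [W1 sa sb Eq] CC.
pose o0 : 'I_n := Ordinal n1.
have ins : forall t, (t < n)%N -> val (insubd o0 t) = t by move=> t ht; rewrite val_insubd ht.
pose Lf (t : nat) : rat := wact n w' (tau n k I J) (insubd o0 t) + rho_k n (insubd o0 t) + c.
pose sf (t : nat) : rat := Wact n sg' (rho_g n) (insubd o0 t).
pose Af (t : nat) : nat := (n - (sg'.1^-1)%g (insubd o0 t))%N.
have EqF : forall t, (t < n)%N -> Lf t = sf t + nth 0 (@shiftE n p q eps eta a' b') t.
  by move=> t ht; rewrite /Lf /sf Eq ins.
have absf : forall t, `|sf t| = (Af t)%:R.
  move=> t; rewrite /sf Wact_rho normrM normrX normrN1 expr1n mul1r ger0_norm //.
have Afr : forall t, (1 <= Af t <= n)%N.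
  by move=> t; rewrite /Af; have := ltn_ord ((sg'.1^-1)%g (insubd o0 t)); clear; lia.
have Afinj : forall t1 t2, (t1 < n)%N -> (t2 < n)%N -> Af t1 = Af t2 -> t1 = t2.
  move=> t1 t2 h1 h2; rewrite /Af => E.
  have E2 : (sg'.1^-1)%g (insubd o0 t1) = (sg'.1^-1)%g (insubd o0 t2).
    apply: ord_inj; move: E; have := ltn_ord ((sg'.1^-1)%g (insubd o0 t1));
    have := ltn_ord ((sg'.1^-1)%g (insubd o0 t2)); clear; lia.
  by have := perm_inj E2 => /(congr1 val); rewrite !ins.
have sfB : forall t, (t < q)%N -> sf t = (nth 0%N X t)%:R.
  move=> t ht; have tn : (t < n)%N by move: ht nE; clear; lia.
  have [hh _] := CC (insubd o0 t); rewrite ins // in hh.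
  by rewrite /sf hh.
have sfA : forall t, (n - p <= t < n)%N -> sf t = - (nth 0%N Y (n - 1 - t))%:R.
  move=> t /andP[ht1 ht2].
  have [_ hh] := CC (insubd o0 t); rewrite ins // in hh.
  by rewrite /sf hh.
have AfB : forall t, (t < q)%N -> Af t = nth 0%N X t.
  move=> t ht; apply/eqP; rewrite -(eqr_nat rat) -absf sfB // ger0_norm //.
have AfA : forall t, (n - p <= t < n)%N -> Af t = nth 0%N Y (n - 1 - t).
  move=> t ht; apply/eqP; rewrite -(eqr_nat rat) -absf sfA // normrN ger0_norm //.
have covXY : forall x, (u + v + 1 <= x <= n)%N -> x \in (X : seq nat) ++ Y.
  have sub : {subset (X : seq nat) ++ Y <= iota (u + v + 1) (2 * k)}.
    by move=> x /memXY; rewrite mem_iota; move: nE pqk; clear; lia.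
  have szle : (size (iota (u + v + 1) (2 * k)) <= size ((X : seq nat) ++ Y))%N.
    by rewrite size_cat !size_tuple; move: pqk; clear; lia.
  have [_ EE] := uniq_min_size uXY sub szle.
  by move=> x hx; rewrite EE mem_iota; move: hx nE pqk; clear; lia.
have Afmid : forall t, (q <= t < q + (u + v))%N -> (Af t <= u + v)%N.
  move=> t ht; rewrite leqNgt; apply/negP => hgt.
  have tn : (t < n)%N by move: ht nE; clear; lia.
  have := covXY (Af t) (ltac:(have := Afr t; move: hgt; clear; lia)).
  rewrite mem_cat => /orP[] /(nthP 0%N)[i]; rewrite size_tuple => hi E.
    have := Afinj i t (ltac:(move: hi nE; clear; lia)) tn; rewrite AfB // E => /(_ erefl).
    by move: ht hi; clear; lia.
  have := Afinj (n - 1 - i)%N t (ltac:(move: hi nE; clear; lia)) tn.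
  rewrite AfA; last by move: hi nE p0; clear; lia.
  have -> : (n - 1 - (n - 1 - i) = i)%N by move: hi nE; clear; lia.
  by rewrite E => /(_ erefl); move: ht hi nE; clear; lia.
have midL : forall t, (q <= t < q + (u + v))%N -> Lf t = sf t.
  move=> t ht; have tn : (t < n)%N by move: ht nE; clear; lia.
  rewrite EqF // shiftE_nth //.
  have -> : (t < q)%N = false by move: ht; clear; lia.
  have -> : (t < n - p)%N by move: ht nE; clear; lia.
  by rewrite addr0.
pose Dm (t : nat) : rat := Lf t + t%:R - c - k%:R.
have DmE : forall t, (t < n)%N -> Dm t = mu k I J ((w'^-1)%g (insubd o0 t)) - k%:R.
  move=> t ht; rewrite /Dm /Lf tau_id ins //; ring.
have PD : perm_eq (map Dm (iota 0 n)) (map (fun s => mu k I J s - k%:R) (iota 0 n)).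
  have E1 : map Dm (iota 0 n) = map (fun i : 'I_n => mu k I J ((w'^-1)%g i) - k%:R) (enum 'I_n).
    rewrite -val_enum_ord -map_comp; apply/eq_in_map => i _ /=.
    by rewrite DmE // valKd.
  have E2 : map (fun s => mu k I J s - k%:R) (iota 0 n) =
            map (fun i : 'I_n => mu k I J i - k%:R) (enum 'I_n).
    by rewrite -val_enum_ord -map_comp.
  rewrite E1 E2 (map_comp (fun i : 'I_n => mu k I J i - k%:R) (fun i => (w'^-1)%g i)).
  by apply: perm_map; apply: perm_map_enum.
pose f (j : nat) : rat := Lf (q + j)%N + j%:R.
pose Am (j : nat) : nat := Af (q + j)%N.
pose rest := map Dm (iota 0 q ++ iota (q + (u + v)) p).
have Hperm : perm_eq (map f (iota 0 (u + v)) ++ rest) (pool (u + v) I' J' (2 * k)).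
  have E3 : map f (iota 0 (u + v)) = map Dm (iota q (u + v)).
    have -> : iota q (u + v) = map (addn q) (iota 0 (u + v)) by rewrite -iotaDl addn0.
    rewrite -map_comp; apply: eq_map => j /=.
    by rewrite /f /Dm cE natrD; ring.
  have := pool_mu allIJ; rewrite sI sJ -/I' -/J'.
  have -> : (u + 2 * k + v = n)%N by move: nE pqk; clear; lia.
  move=> PP; apply: perm_trans PP; apply: perm_trans PD.
  have IE : iota 0 n = iota 0 q ++ iota q (u + v) ++ iota (q + (u + v)) p.
    by rewrite nE (iotaD 0 (q + (u + v)) p) (iotaD 0 q (u + v)) !add0n catA.
  rewrite E3 /rest IE !map_cat.
  by rewrite perm_catCA perm_refl.
have hA : forall j, (j < u + v)%N -> `|f j - j%:R| = (Am j)%:R /\ (0 < Am j <= u + v)%N.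
  move=> j hj; split.
    by rewrite /f addrK midL ?absf //; move: hj; clear; lia.
  have := Afr (q + j)%N; have := Afmid (q + j)%N (ltac:(move: hj; clear; lia)); rewrite /Am; clear; lia.
have injA : forall i j, (i < u + v)%N -> (j < u + v)%N -> Am i = Am j -> i = j.
  move=> i j hi hj E; have := Afinj (q + i)%N (q + j)%N (ltac:(move: hi nE; clear; lia))
     (ltac:(move: hj nE; clear; lia)) E; clear; lia.
have [Pf Prest] := peel sI' sJ' PIJ' hA injA Hperm.
have LfE : forall t, (t < n)%N -> Lf t = Lstar t.
  move=> t ht; case: (boolP (q <= t < q + (u + v))%N) => mid.
    rewrite /Lstar mid.
    have tE : t = (q + (t - q))%N by move: mid; clear; lia.
    have := Pf (t - q)%N (ltac:(move: mid; clear; lia)); rewrite /f /= -tE => hh.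
    have hL : Lf t = expl (u + v) I' J' (t - q) - (t - q)%:R by rewrite -hh; ring.
    rewrite hL; case: (ltnP (t - q) u) => hu.
      rewrite expl_lo ?szI' // sI2 //; move: mid hu; clear; lia.
    rewrite expl_hi ?szI' // sJ2 //; move: mid hu; clear; lia.
  rewrite /Lstar (negbTE mid).
  have : Dm t \in rest.
    apply: map_f; rewrite mem_cat !mem_iota; move: mid ht nE; clear; lia.
  rewrite (perm_mem Prest) => /nseqP[hh _]; move: hh; rewrite /Dm szI' cE; lra.
have sfS : forall t, (t < n)%N -> sf t = sstar t.
  move=> t ht; case: (ltnP t q) => h1; first by rewrite sfB // sB.
  case: (ltnP t (q + (u + v))) => h2.
    have mid : (q <= t < q + (u + v))%N by rewrite h1 h2.
    rewrite -midL // LfE // /Lstar mid //.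
  rewrite sfA ?sA //; move: h2 ht nE; clear; lia.
have shE : forall t, (t < n)%N ->
    nth 0 (@shiftE n p q eps eta a' b') t = nth 0 (@shiftE n p q eps eta as_ bs) t.
  move=> t ht; have := EqF t ht; have := eqs (insubd o0 t).
  rewrite ins // -(LfE t ht) -(sfS t ht); lra.
split.
- apply/ffunP => t; rewrite [RHS]ffunE.
  have := LfE t (ltn_ord t); rewrite /Lf valKd; lra.
- apply: Wact_inj => t; rewrite Wsg -(sfS t (ltn_ord t)) /sf valKd //.
- apply: val_inj; apply: (@eq_from_nth _ 0%N); first by rewrite !size_tuple.
  move=> i; rewrite size_tuple => hi.
  have tn : (n - 1 - i < n)%N by have := n1; move: hi p0; clear; lia.
  have := shE _ tn; rewrite !shiftE_nth //.
  have -> : (n - 1 - i < q)%N = false by move: hi nE; clear; lia.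
  have -> : (n - 1 - i < n - p)%N = false by move: hi nE; clear; lia.
  have -> : (n - 1 - (n - 1 - i) = i)%N by move: hi nE p0; clear; lia.
  by move/eqP; rewrite eqr_nat eqn_add2l eqn_mul2l /= => /eqP.
- apply: val_inj; apply: (@eq_from_nth _ 0%N); first by rewrite !size_tuple.
  move=> i; rewrite size_tuple => hi.
  have tn : (i < n)%N by move: hi nE; clear; lia.
  have := shE _ tn; rewrite !shiftE_nth // hi.
  by move/oppr_inj/eqP; rewrite eqr_nat eqn_add2l eqn_mul2l /= => /eqP.
Qed.
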